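(* Let $\mathcal M_R$ be the set of paravector-valued functions $f=\sum_{j=0}^7f_je_j$ on $\mathbb R^8$ (with partial derivatives) satisfying $\partial_xf=0$, equivalently the Riesz system $\partial_{x_0}f_0-\sum_{i=1}^7\partial_{x_i}f_i=0$, $\partial_{x_0}f_i+\partial_{x_i}f_0=0$ ($1\le i\le7$), $\partial_{x_i}f_j-\partial_{x_j}f_i=0$ ($1\le i\ne j\le 7$). Then \[ \mathcal M_R\subsetneq\{f:\partial_xfI=0\}=\{f:[\partial_xfI]_j=0,\ j=0,1,2\}. \] For instance $f=x_2e_1-x_7e_4$ satisfies $\partial_xf=e_4e_7-e_1e_2\neq0$ but $[\partial_xfI]_j=0$ for $j=0,1,2$.
   Context: $\mathrm{Cl}_{0,7}$ is the real associative Clifford algebra generated by $e_1,\dots,e_7$ with $e_ie_j+e_je_i=-2\delta_{ij}$ and $e_0=1$; $e_{i_1\cdots i_k}=e_{i_1}\cdots e_{i_k}$; $[c]_k$ is the grade-$k$ part of $c$. $\partial_xf=\sum_{i,j=0}^7e_ie_j\,\partial_{x_i}f_j$. $W=e_{123}+e_{145}+e_{176}+e_{246}+e_{257}+e_{347}+e_{365}$ and $I=\frac1{16}(1+We_{1234567})(1-e_{1234567})$. *)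

(* Defs.v *)
From Stdlib Require Import Reals Arith ClassicalEpsilon.
Open Scope R_scope.

(* A multivector is a coefficient function on basis blades.  The blade
   e_{i_1...i_k} with 1 <= i_1 < ... < i_k <= 7 is indexed by the bitmask
   with bits (i_1 - 1), ..., (i_k - 1) set; only indices 0..127 are meaningful. *)
Definition MV := nat -> R.

Definition bit (A i : nat) : nat := if Nat.testbit A i then 1%nat else 0%nat.

Definition popcount (A : nat) : nat :=
  (bit A 0 + bit A 1 + bit A 2 + bit A 3 + bit A 4 + bit A 5 + bit A 6)%nat.

(* number of pairs (i in A, j in B) with i > j: transpositions needed to
   reorder e_A e_B *)
Fixpoint inv_count_aux (A B n : nat) : nat :=
  match n with
  | O => O
  | S m => (inv_count_aux A B m +
            (if Nat.testbit A m then
               ((fix cnt (k : nat) : nat :=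
                   match k with O => O | S k' => (cnt k' + bit B k')%nat end) m)
             else O))%nat
  end.

(* e_A e_B = blade_sign A B * e_{A xor B}, using e_i e_j = - e_j e_i (i<>j)
   and e_i^2 = -1 *)
Definition blade_sign (A B : nat) : R :=
  (-1) ^ (inv_count_aux A B 7 + popcount (Nat.land A B)).

Definition mv_mul (a b : MV) : MV :=
  fun k => sum_f_R0 (fun A => blade_sign A (Nat.lxor A k) * a A * b (Nat.lxor A k)) 127.
Definition mv_add (a b : MV) : MV := fun k => a k + b k.
Definition mv_sub (a b : MV) : MV := fun k => a k - b k.
Definition mv_scal (r : R) (a : MV) : MV := fun k => r * a k.

Definition blade (A : nat) : MV := fun k => if Nat.eqb k A then 1 else 0.

Definition e (i : nat) : MV :=
  match i with O => blade 0 | S m => blade (2 ^ m) end.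
Definition mv_one : MV := e 0.

Definition grade (g : nat) (c : MV) : MV :=
  fun k => if Nat.eqb (popcount k) g then c k else 0.

Definition MVzero (c : MV) : Prop := forall k, (k < 128)%nat -> c k = 0.
Definition MVeq (a b : MV) : Prop := forall k, (k < 128)%nat -> a k = b k.

Notation "a ** b" := (mv_mul a b) (at level 40, left associativity).

Definition e1234567 : MV := e 1 ** e 2 ** e 3 ** e 4 ** e 5 ** e 6 ** e 7.

Definition W : MV :=
  mv_add (e 1 ** e 2 ** e 3) (mv_add (e 1 ** e 4 ** e 5) (mv_add (e 1 ** e 7 ** e 6)
  (mv_add (e 2 ** e 4 ** e 6) (mv_add (e 2 ** e 5 ** e 7) (mv_add (e 3 ** e 4 ** e 7)
  (e 3 ** e 6 ** e 5)))))).

Definition I : MV :=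
  mv_scal (1/16) (mv_add mv_one (W ** e1234567) ** mv_sub mv_one e1234567).

Definition Pt : Type := (R * R * R * R * R * R * R * R)%type.

Definition coord (p : Pt) (i : nat) : R :=
  let '(x0, x1, x2, x3, x4, x5, x6, x7) := p in
  match i with
  | 0 => x0 | 1 => x1 | 2 => x2 | 3 => x3 | 4 => x4 | 5 => x5 | 6 => x6
  | 7 => x7 | _ => 0 end.

Definition upd (p : Pt) (i : nat) (t : R) : Pt :=
  let '(x0, x1, x2, x3, x4, x5, x6, x7) := p in
  match i with
  | 0 => (t, x1, x2, x3, x4, x5, x6, x7)
  | 1 => (x0, t, x2, x3, x4, x5, x6, x7)
  | 2 => (x0, x1, t, x3, x4, x5, x6, x7)
  | 3 => (x0, x1, x2, t, x4, x5, x6, x7)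
  | 4 => (x0, x1, x2, x3, t, x5, x6, x7)
  | 5 => (x0, x1, x2, x3, x4, t, x6, x7)
  | 6 => (x0, x1, x2, x3, x4, x5, t, x7)
  | 7 => (x0, x1, x2, x3, x4, x5, x6, t)
  | _ => p end.

(* partial derivative d/dx_i of g at x (the derivative when it exists) *)
Definition partial (g : Pt -> R) (i : nat) (x : Pt) : R :=
  epsilon (inhabits 0)
    (fun l => derivable_pt_lim (fun t => g (upd x i t)) (coord x i) l).

(* a paravector-valued function f = sum_{j=0}^7 f_j e_j, given by its
   components f j (only j = 0..7 are used) *)
Definition ParaFun : Type := nat -> Pt -> R.

Definition HasPartials (f : ParaFun) : Prop :=
  forall (j i : nat) (x : Pt), (j <= 7)%nat -> (i <= 7)%nat ->
    exists l, derivable_pt_lim (fun t => f j (upd x i t)) (coord x i) l.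

Definition dirac (f : ParaFun) (x : Pt) : MV :=
  fun k => sum_f_R0 (fun i => sum_f_R0 (fun j =>
             partial (f j) i x * (e i ** e j) k) 7) 7.

Definition Riesz (f : ParaFun) (x : Pt) : Prop :=
  partial (f 0%nat) 0 x - sum_f_R0 (fun i => partial (f (S i)) (S i) x) 6 = 0
  /\ (forall i, (1 <= i <= 7)%nat -> partial (f i) 0 x + partial (f 0%nat) i x = 0)
  /\ (forall i j, (1 <= i <= 7)%nat -> (1 <= j <= 7)%nat -> i <> j ->
        partial (f j) i x - partial (f i) j x = 0).

Definition InMR (f : ParaFun) : Prop := HasPartials f /\ forall x, MVzero (dirac f x).

Definition ex_f : ParaFun :=
  fun j x => match j with 1 => coord x 2 | 4 => - coord x 7 | _ => 0 end.

(* Main.v *)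
Require Import Defs.
From Stdlib Require Import Reals Arith ZArith List Lra Lia Bool ClassicalEpsilon.
Import ListNotations.
Open Scope R_scope.

Definition Zf (f : nat -> Z) : MV := fun k => IZR (f k).

Fixpoint zsum (g : nat -> Z) (N : nat) : Z :=
  match N with O => g O | S n => (zsum g n + g (S n))%Z end.

Lemma sum_IZR g N : sum_f_R0 (fun n => IZR (g n)) N = IZR (zsum g N).
Proof. induction N; simpl; [reflexivity|]. rewrite IHN, plus_IZR; reflexivity. Qed.

Lemma pow_m1 n : (-1) ^ n = IZR (if Nat.even n then 1%Z else (-1)%Z).
Proof.
  induction n; [reflexivity|].
  rewrite Nat.even_succ, <- Nat.negb_even. simpl pow. rewrite IHn.
  destruct (Nat.even n); simpl; lra.
Qed.

Definition zbs (A B : nat) : Z :=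
  if Nat.even (inv_count_aux A B 7 + popcount (Nat.land A B)) then 1%Z else (-1)%Z.

Lemma blade_sign_Z A B : blade_sign A B = IZR (zbs A B).
Proof. unfold blade_sign, zbs. apply pow_m1. Qed.

Definition zmul (a b : nat -> Z) (k : nat) : Z :=
  zsum (fun A => zbs A (Nat.lxor A k) * a A * b (Nat.lxor A k))%Z 127.

Lemma mul_Zf fa fb k : mv_mul (Zf fa) (Zf fb) k = IZR (zmul fa fb k).
Proof.
  unfold mv_mul, zmul. rewrite <- sum_IZR. apply sum_eq; intros.
  unfold Zf. rewrite blade_sign_Z, !mult_IZR. reflexivity.
Qed.

Lemma forallb_seq f n : forallb f (seq 0 n) = true -> forall i, (i < n)%nat -> f i = true.
Proof.
  intros H i Hi. rewrite forallb_forall in H. apply H. apply in_seq. lia.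
Qed.

Lemma lxor_lt A k : (A < 128)%nat -> (k < 128)%nat -> (Nat.lxor A k < 128)%nat.
Proof.
  intros HA Hk.
  assert (H : forallb (fun A => forallb (fun k => Nat.ltb (Nat.lxor A k) 128) (seq 0 128)) (seq 0 128) = true)
    by (vm_compute; reflexivity).
  pose proof (forallb_seq _ _ H A HA) as H1.
  pose proof (forallb_seq _ _ H1 k Hk) as H2. apply Nat.ltb_lt in H2. exact H2.
Qed.

Lemma mul_compat a a' b b' : MVeq a a' -> MVeq b b' -> MVeq (a ** b) (a' ** b').
Proof.
  intros Ha Hb k Hk. unfold mv_mul. apply sum_eq; intros A HA.
  rewrite Ha by lia. rewrite Hb by (apply lxor_lt; lia). reflexivity.
Qed.

Definition checkeq (f g : nat -> Z) : bool :=
  forallb (fun k => Z.eqb (f k) (g k)) (seq 0 128).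

Lemma checkeq_ok f g : checkeq f g = true -> forall k, (k < 128)%nat -> f k = g k.
Proof. intros H k Hk. apply Z.eqb_eq. exact (forallb_seq _ _ H k Hk). Qed.

Lemma mulMV a b fa fb fc : MVeq a (Zf fa) -> MVeq b (Zf fb) -> checkeq (zmul fa fb) fc = true ->
  MVeq (a ** b) (Zf fc).
Proof.
  intros Ha Hb Hc k Hk. rewrite (mul_compat _ _ _ _ Ha Hb k Hk), mul_Zf.
  unfold Zf. rewrite (checkeq_ok _ _ Hc k Hk). reflexivity.
Qed.

Lemma addMV a b fa fb : MVeq a (Zf fa) -> MVeq b (Zf fb) ->
  MVeq (mv_add a b) (Zf (fun k => fa k + fb k)%Z).
Proof. intros Ha Hb k Hk. unfold mv_add, Zf. rewrite Ha, Hb, plus_IZR by lia. reflexivity. Qed.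

Lemma subMV a b fa fb : MVeq a (Zf fa) -> MVeq b (Zf fb) ->
  MVeq (mv_sub a b) (Zf (fun k => fa k - fb k)%Z).
Proof. intros Ha Hb k Hk. unfold mv_sub, Zf. rewrite Ha, Hb, minus_IZR by lia. reflexivity. Qed.

Definition zbl (s : Z) (b : nat) (k : nat) : Z := if Nat.eqb k b then s else 0%Z.

Definition bi (i : nat) : nat := match i with O => O | S m => 2 ^ m end.


Definition ze (i : nat) : nat -> Z := zbl 1 (bi i).

Lemma e_MV i : MVeq (e i) (Zf (ze i)).
Proof. intros k _. unfold e, Zf, ze, zbl, blade, bi. destruct i; destruct (Nat.eqb _ _); reflexivity. Qed.


Definition zIl : list Z :=
[(1)%Z; (0)%Z; (0)%Z; (0)%Z; (0)%Z; (0)%Z; (0)%Z; (-1)%Z; (0)%Z; (0)%Z; (0)%Z; (0)%Z; (0)%Z; (0)%Z; (0)%Z; (0)%Z; (0)%Z; (0)%Z; (0)%Z; (0)%Z; (0)%Z; (0)%Z; (0)%Z; (0)%Z; (0)%Z; (-1)%Z; (0)%Z; (0)%Z; (0)%Z; (0)%Z; (-1)%Z; (0)%Z; (0)%Z; (0)%Z; (0)%Z; (0)%Z; (0)%Z; (0)%Z; (0)%Z; (0)%Z; (0)%Z; (0)%Z; (-1)%Z; (0)%Z; (0)%Z; (1)%Z; (0)%Z; (0)%Z; (0)%Z; (0)%Z; (0)%Z; (1)%Z; (1)%Z; (0)%Z; (0)%Z; (0)%Z; (0)%Z; (0)%Z; (0)%Z; (0)%Z; (0)%Z; (0)%Z;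 (0)%Z; (0)%Z; (0)%Z; (0)%Z; (0)%Z; (0)%Z; (0)%Z; (0)%Z; (0)%Z; (0)%Z; (0)%Z; (0)%Z; (0)%Z; (-1)%Z; (-1)%Z; (0)%Z; (0)%Z; (0)%Z; (0)%Z; (0)%Z; (-1)%Z; (0)%Z; (0)%Z; (1)%Z; (0)%Z; (0)%Z; (0)%Z; (0)%Z; (0)%Z; (0)%Z; (0)%Z; (0)%Z; (0)%Z; (0)%Z; (0)%Z; (1)%Z; (0)%Z; (0)%Z; (0)%Z; (0)%Z; (1)%Z; (0)%Z; (0)%Z; (0)%Z; (0)%Z; (0)%Z; (0)%Z; (0)%Z; (0)%Z; (0)%Z; (0)%Z; (0)%Z; (0)%Z; (0)%Z; (0)%Z; (0)%Z; (0)%Z; (0)%Z; (1)%Z; (0)%Z; (0)%Z; (0)%Z; (0)%Z; (0)%Z; (0)%Z; (-1)%Z].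
Definition zIf (k : nat) : Z := nth k zIl 0%Z.

Definition zXl : list Z := [
(1)%Z; (0)%Z; (0)%Z; (0)%Z; (0)%Z; (0)%Z; (0)%Z; (0)%Z; (0)%Z; (0)%Z; (0)%Z; (0)%Z; (0)%Z; (0)%Z; (0)%Z; (0)%Z; (0)%Z; (0)%Z; (0)%Z; (0)%Z; (0)%Z; (0)%Z; (0)%Z; (0)%Z; (0)%Z; (0)%Z; (0)%Z; (0)%Z; (0)%Z; (0)%Z; (-1)%Z; (0)%Z; (0)%Z; (0)%Z; (0)%Z; (0)%Z; (0)%Z; (0)%Z; (0)%Z; (0)%Z; (0)%Z; (0)%Z; (0)%Z; (0)%Z; (0)%Z; (1)%Z; (0)%Z; (0)%Z; (0)%Z; (0)%Z; (0)%Z; (1)%Z; (0)%Z; (0)%Z; (0)%Z; (0)%Z; (0)%Z; (0)%Z; (0)%Z; (0)%Z; (0)%Z; (0)%Z; (0)%Z; (0)%Z; (0)%Z; (0)%Z; (0)%Z; (0)%Z; (0)%Z; (0)%Z; (0)%Z; (0)%Z; (0)%Z; (0)%Z; (0)%Z; (-1)%Z; (0)%Z; (0)%Z; (0)%Z; (0)%Z; (0)%Z; (0)%Z; (0)%Z; (0)%Z; (0)%Z; (1)%Z; (0)%Z; (0)%Z; (0)%Z; (0)%Z; (0)%Z; (0)%Z; (0)%Z; (0)%Z; (0)%Z; (0)%Z; (0)%Z; (0)%Z; (0)%Z; (0)%Z; (0)%Z; (0)%Z; (1)%Z; (0)%Z; (0)%Z; (0)%Z; (0)%Z; (0)%Z;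 (0)%Z; (0)%Z; (0)%Z; (0)%Z; (0)%Z; (0)%Z; (0)%Z; (0)%Z; (0)%Z; (0)%Z; (0)%Z; (0)%Z; (1)%Z; (0)%Z; (0)%Z; (0)%Z; (0)%Z; (0)%Z; (0)%Z; (0)%Z].

Lemma zsum_single g N a : (a <= N)%nat -> (forall n, (n <= N)%nat -> n <> a -> g n = 0%Z) ->
  zsum g N = g a.
Proof.
  induction N; intros Ha H; simpl.
  - assert (a = 0%nat) by lia. subst. reflexivity.
  - destruct (Nat.eq_dec a (S N)) as [->|Hne].
    + assert (zsum g N = 0%Z).
      { clear IHN Ha. assert (forall M, (M <= N)%nat -> zsum g M = 0%Z).
        { induction M; intros HM; simpl; rewrite H by lia; [reflexivity|]. rewrite IHM by lia. reflexivity. }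
        apply H0; lia. }
      lia.
    + rewrite IHN by (try lia; intros; apply H; lia). rewrite (H (S N)) by lia. lia.
Qed.

Lemma lxor_invol B k : Nat.lxor (Nat.lxor B k) k = B.
Proof. rewrite Nat.lxor_assoc, Nat.lxor_nilpotent, Nat.lxor_0_r. reflexivity. Qed.

Lemma zmul_bl_l s A fb k : (A <= 127)%nat ->
  zmul (zbl s A) fb k = (zbs A (Nat.lxor A k) * s * fb (Nat.lxor A k))%Z.
Proof.
  intros HA. unfold zmul. rewrite (zsum_single _ _ A HA).
  - unfold zbl. rewrite Nat.eqb_refl. reflexivity.
  - intros n _ Hn. unfold zbl. apply Nat.eqb_neq in Hn. rewrite Hn. lia.
Qed.

Lemma zmul_bl_r s B fa k : (B < 128)%nat -> (k < 128)%nat ->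
  zmul fa (zbl s B) k = (zbs (Nat.lxor B k) B * fa (Nat.lxor B k) * s)%Z.
Proof.
  intros HB Hk. unfold zmul.
  assert (HA : (Nat.lxor B k <= 127)%nat) by (pose proof (lxor_lt B k HB Hk); lia).
  rewrite (zsum_single _ _ _ HA).
  - rewrite lxor_invol. unfold zbl. rewrite Nat.eqb_refl. reflexivity.
  - intros n _ Hn. unfold zbl. destruct (Nat.eqb_spec (Nat.lxor n k) B); [|lia].
    exfalso. apply Hn. subst B. rewrite lxor_invol. reflexivity.
Qed.

Lemma mulMV_l a b s A fb fc : MVeq a (Zf (zbl s A)) -> MVeq b (Zf fb) -> (A <= 127)%nat ->
  checkeq (fun k => zbs A (Nat.lxor A k) * s * fb (Nat.lxor A k))%Z fc = true ->
  MVeq (a ** b) (Zf fc).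
Proof.
  intros Ha Hb HA Hc k Hk. rewrite (mul_compat _ _ _ _ Ha Hb k Hk), mul_Zf, zmul_bl_l by exact HA.
  unfold Zf. rewrite (checkeq_ok _ _ Hc k Hk). reflexivity.
Qed.

Lemma mulMV_r a b s B fa fc : MVeq a (Zf fa) -> MVeq b (Zf (zbl s B)) -> (B < 128)%nat ->
  checkeq (fun k => zbs (Nat.lxor B k) B * fa (Nat.lxor B k) * s)%Z fc = true ->
  MVeq (a ** b) (Zf fc).
Proof.
  intros Ha Hb HB Hc k Hk. rewrite (mul_compat _ _ _ _ Ha Hb k Hk), mul_Zf, zmul_bl_r by assumption.
  unfold Zf. rewrite (checkeq_ok _ _ Hc k Hk). reflexivity.
Qed.

Definition zXf (k : nat) : Z := nth k zXl 0%Z.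

Lemma I_val k : (k < 128)%nat -> I k = / 16 * IZR (zIf k).
Proof.
  intros Hk.
  assert (H7 : MVeq e1234567 (Zf (zbl 1 127))).
  { unfold e1234567.
    apply (mulMV_r _ _ 1 (bi 7) (zbl 1 63)); [|apply e_MV|cbv; lia|vm_compute; reflexivity].
    apply (mulMV_r _ _ 1 (bi 6) (zbl 1 31)); [|apply e_MV|cbv; lia|vm_compute; reflexivity].
    apply (mulMV_r _ _ 1 (bi 5) (zbl 1 15)); [|apply e_MV|cbv; lia|vm_compute; reflexivity].
    apply (mulMV_r _ _ 1 (bi 4) (zbl 1 7)); [|apply e_MV|cbv; lia|vm_compute; reflexivity].
    apply (mulMV_r _ _ 1 (bi 3) (zbl 1 3)); [|apply e_MV|cbv; lia|vm_compute; reflexivity].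
    apply (mulMV_r _ _ 1 (bi 2) (ze 1)); [|apply e_MV|cbv; lia|vm_compute; reflexivity].
    apply e_MV. }
  assert (T : forall (a b c : nat) s1 b1 fc,
     (bi c < 128)%nat ->
     checkeq (fun k => zbs (Nat.lxor (bi b) k) (bi b) * ze a (Nat.lxor (bi b) k) * 1)%Z (zbl s1 b1) = true ->
     checkeq (fun k => zbs (Nat.lxor (bi c) k) (bi c) * zbl s1 b1 (Nat.lxor (bi c) k) * 1)%Z fc = true ->
     (bi b < 128)%nat ->
     MVeq (e a ** e b ** e c) (Zf fc)).
  { intros. apply (mulMV_r _ _ 1 (bi c) (zbl s1 b1)); [|apply e_MV|assumption|assumption].
    apply (mulMV_r _ _ 1 (bi b) (ze a)); [apply e_MV|apply e_MV|assumption|assumption]. }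
  assert (HW := @addMV _ _ _ _
     (T 1%nat 2%nat 3%nat 1%Z 3%nat (zbl 1 7) ltac:(cbv; lia) ltac:(vm_compute; reflexivity) ltac:(vm_compute; reflexivity) ltac:(cbv; lia))
    (@addMV _ _ _ _
     (T 1%nat 4%nat 5%nat 1%Z 9%nat (zbl 1 25) ltac:(cbv; lia) ltac:(vm_compute; reflexivity) ltac:(vm_compute; reflexivity) ltac:(cbv; lia))
    (@addMV _ _ _ _
     (T 1%nat 7%nat 6%nat 1%Z 65%nat (zbl (-1) 97) ltac:(cbv; lia) ltac:(vm_compute; reflexivity) ltac:(vm_compute; reflexivity) ltac:(cbv; lia))
    (@addMV _ _ _ _
     (T 2%nat 4%nat 6%nat 1%Z 10%nat (zbl 1 42) ltac:(cbv; lia) ltac:(vm_compute; reflexivity) ltac:(vm_compute; reflexivity) ltac:(cbv; lia))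
    (@addMV _ _ _ _
     (T 2%nat 5%nat 7%nat 1%Z 18%nat (zbl 1 82) ltac:(cbv; lia) ltac:(vm_compute; reflexivity) ltac:(vm_compute; reflexivity) ltac:(cbv; lia))
    (@addMV _ _ _ _
     (T 3%nat 4%nat 7%nat 1%Z 12%nat (zbl 1 76) ltac:(cbv; lia) ltac:(vm_compute; reflexivity) ltac:(vm_compute; reflexivity) ltac:(cbv; lia))
     (T 3%nat 6%nat 5%nat 1%Z 36%nat (zbl (-1) 52) ltac:(cbv; lia) ltac:(vm_compute; reflexivity) ltac:(vm_compute; reflexivity) ltac:(cbv; lia)))))))).
  fold W in HW.
  assert (HWE := mulMV_r _ _ 1 127 _ (fun k => zXf k - ze 0 k)%Z HW H7 ltac:(lia) ltac:(vm_compute; reflexivity)).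
  assert (HX := addMV _ _ _ _ (e_MV 0) HWE).
  assert (HY := subMV _ _ _ _ (e_MV 0) H7).
  unfold I, mv_scal, mv_one.
  rewrite (mulMV _ _ _ _ zIf HX HY ltac:(vm_compute; reflexivity) k Hk).
  unfold Zf. lra.
Qed.

Lemma forallb_seq' f s n : forallb f (seq s n) = true -> forall i, (s <= i < s + n)%nat -> f i = true.
Proof. intros H i Hi. rewrite forallb_forall in H. apply H. apply in_seq. lia. Qed.

Lemma sum_zero g N : (forall n, (n <= N)%nat -> g n = 0) -> sum_f_R0 g N = 0.
Proof. induction N; intros H; simpl; rewrite H by lia; [reflexivity|]. rewrite IHN by (intros; apply H; lia). ring. Qed.

Lemma sum_single g N a : (a <= N)%nat -> (forall n, (n <= N)%nat -> n <> a -> g n = 0) ->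
  sum_f_R0 g N = g a.
Proof.
  induction N; intros Ha H; simpl.
  - assert (a = 0%nat) by lia. subst. reflexivity.
  - destruct (Nat.eq_dec a (S N)) as [->|Hne].
    + rewrite sum_zero by (intros; apply H; lia). ring.
    + rewrite IHN by (try lia; intros; apply H; lia). rewrite (H (S N)) by lia. ring.
Qed.

Lemma sum_mul_r An N x : sum_f_R0 An N * x = sum_f_R0 (fun i => An i * x) N.
Proof. rewrite Rmult_comm, scal_sum. reflexivity. Qed.

Lemma sum_swap (g : nat -> nat -> R) n m :
  sum_f_R0 (fun a => sum_f_R0 (fun b => g a b) m) n = sum_f_R0 (fun b => sum_f_R0 (fun a => g a b) n) m.
Proof.
  induction n; simpl; [reflexivity|]. rewrite IHn, <- sum_plus. reflexivity.
Qed.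

Definition Lform (p : nat -> nat -> R) (c : nat -> nat -> Z) : R :=
  sum_f_R0 (fun i => sum_f_R0 (fun j => p i j * IZR (c i j)) 7) 7.

Definition colEq (c1 c2 : nat -> nat -> Z) : bool :=
  forallb (fun a => forallb (fun b => Z.eqb (c1 a b) (c2 a b)) (seq 0 8)) (seq 0 8).

Lemma Lform_ext p c1 c2 : colEq c1 c2 = true -> Lform p c1 = Lform p c2.
Proof.
  intros H. unfold Lform. apply sum_eq; intros i Hi. apply sum_eq; intros j Hj.
  pose proof (forallb_seq _ _ H i ltac:(lia)) as H1.
  pose proof (forallb_seq _ _ H1 j ltac:(lia)) as H2. apply Z.eqb_eq in H2. rewrite H2. reflexivity.
Qed.

Lemma Lform_scal p s c : Lform p (fun a b => s * c a b)%Z = IZR s * Lform p c.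
Proof.
  unfold Lform. rewrite scal_sum. apply sum_eq; intros i _. rewrite sum_mul_r.
  apply sum_eq; intros j _. rewrite mult_IZR. ring.
Qed.

Lemma Lform_add p c1 c2 : Lform p (fun a b => c1 a b + c2 a b)%Z = Lform p c1 + Lform p c2.
Proof.
  unfold Lform. rewrite <- sum_plus. apply sum_eq; intros i _. rewrite <- sum_plus.
  apply sum_eq; intros j _. rewrite plus_IZR. ring.
Qed.

Lemma Lform_sub p c1 c2 : Lform p (fun a b => c1 a b - c2 a b)%Z = Lform p c1 - Lform p c2.
Proof.
  unfold Lform. rewrite <- minus_sum. apply sum_eq; intros i _. rewrite <- minus_sum.
  apply sum_eq; intros j _. rewrite minus_IZR. ring.
Qed.

Lemma Lform_zero p : Lform p (fun _ _ => 0%Z) = 0.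
Proof. unfold Lform. apply sum_zero; intros. apply sum_zero; intros. ring. Qed.

Definition delta (i j a b : nat) : Z := if andb (Nat.eqb a i) (Nat.eqb b j) then 1%Z else 0%Z.

Lemma Lform_delta p i j : (i <= 7)%nat -> (j <= 7)%nat -> Lform p (delta i j) = p i j.
Proof.
  intros Hi Hj. unfold Lform. rewrite (sum_single _ _ i Hi).
  - rewrite (sum_single _ _ j Hj). + unfold delta. rewrite !Nat.eqb_refl. simpl. ring.
    + intros n _ Hn. unfold delta. rewrite Nat.eqb_refl. apply Nat.eqb_neq in Hn. rewrite Hn. simpl. ring.
  - intros n _ Hn. apply sum_zero; intros. unfold delta. apply Nat.eqb_neq in Hn. rewrite Hn. simpl. ring.
Qed.

Definition zEf (i j : nat) : nat -> Z := zbl (zbs (bi i) (bi j)) (Nat.lxor (bi i) (bi j)).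

Lemma bi_le i : (i <= 7)%nat -> (bi i <= 64)%nat.
Proof. intros H. destruct i as [|[|[|[|[|[|[|[|i]]]]]]]]; simpl; lia. Qed.

Lemma eij_val i j k : (i <= 7)%nat -> (j <= 7)%nat -> (k < 128)%nat -> (e i ** e j) k = IZR (zEf i j k).
Proof.
  intros Hi Hj Hk. rewrite (mul_compat _ _ _ _ (e_MV i) (e_MV j) k Hk), mul_Zf.
  unfold ze. rewrite zmul_bl_l by (pose proof (bi_le i Hi); lia).
  assert (H : forallb (fun i => forallb (fun j =>
     checkeq (fun k => zbs (bi i) (Nat.lxor (bi i) k) * 1 * zbl 1 (bi j) (Nat.lxor (bi i) k))%Z (zEf i j))
     (seq 0 8)) (seq 0 8) = true) by (vm_compute; reflexivity).
  pose proof (forallb_seq _ _ H i ltac:(lia)) as H1.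
  pose proof (forallb_seq _ _ H1 j ltac:(lia)) as H2.
  rewrite (checkeq_ok _ _ H2 k Hk). reflexivity.
Qed.

Definition Pof (f : ParaFun) (x : Pt) : nat -> nat -> R := fun i j => partial (f j) i x.

Lemma dirac_L f x k : (k < 128)%nat -> dirac f x k = Lform (Pof f x) (fun a b => zEf a b k).
Proof.
  intros Hk. unfold dirac, Lform, Pof. apply sum_eq; intros i Hi. apply sum_eq; intros j Hj.
  rewrite eij_val by lia. reflexivity.
Qed.

Definition cEI (i j k : nat) : Z :=
  (zbs (Nat.lxor (bi i) (bi j)) (Nat.lxor (Nat.lxor (bi i) (bi j)) k) * zbs (bi i) (bi j)
   * zIf (Nat.lxor (Nat.lxor (bi i) (bi j)) k))%Z.

Lemma interchange (P : nat -> nat -> R) (c : nat -> nat -> nat -> R) (w : nat -> R) N n m :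
  sum_f_R0 (fun A => w A * sum_f_R0 (fun i => sum_f_R0 (fun j => P i j * c i j A) m) n) N
  = sum_f_R0 (fun i => sum_f_R0 (fun j => P i j * sum_f_R0 (fun A => w A * c i j A) N) m) n.
Proof.
  transitivity (sum_f_R0 (fun A => sum_f_R0 (fun i => sum_f_R0 (fun j => (P i j * c i j A) * w A) m) n) N).
  { apply sum_eq; intros A _. rewrite Rmult_comm, sum_mul_r. apply sum_eq; intros i _.
    apply sum_mul_r. }
  rewrite sum_swap. apply sum_eq; intros i _. rewrite sum_swap. apply sum_eq; intros j _.
  rewrite scal_sum. apply sum_eq; intros A _. ring.
Qed.

Lemma DI_L f x k : (k < 128)%nat ->
  (dirac f x ** I) k = / 16 * Lform (Pof f x) (fun a b => cEI a b k).
Proof.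
  intros Hk. unfold mv_mul at 1.
  transitivity (sum_f_R0 (fun A => (/16 * IZR (zbs A (Nat.lxor A k)) * IZR (zIf (Nat.lxor A k)))
     * sum_f_R0 (fun i => sum_f_R0 (fun j => Pof f x i j * IZR (zEf i j A)) 7) 7) 127).
  { apply sum_eq; intros A HA. rewrite dirac_L by lia. rewrite I_val by (apply lxor_lt; lia).
    rewrite blade_sign_Z. unfold Lform. ring. }
  rewrite interchange. unfold Lform. rewrite scal_sum. apply sum_eq; intros i Hi.
  rewrite sum_mul_r. apply sum_eq; intros j Hj.
  assert (E : sum_f_R0 (fun A => / 16 * IZR (zbs A (Nat.lxor A k)) * IZR (zIf (Nat.lxor A k)) * IZR (zEf i j A)) 127
     = / 16 * IZR (zmul (zEf i j) zIf k)).
  { unfold zmul. rewrite <- sum_IZR, scal_sum. apply sum_eq; intros A _. rewrite !mult_IZR. ring. }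
  rewrite E. unfold zEf. rewrite zmul_bl_l.
  - unfold cEI. ring_simplify. rewrite !mult_IZR. ring.
  - pose proof (lxor_lt (bi i) (bi j)). pose proof (bi_le i Hi). pose proof (bi_le j Hj).
    assert (Nat.lxor (bi i) (bi j) < 128)%nat by (apply lxor_lt; lia). lia.
Qed.

Definition RieszP (P : nat -> nat -> R) : Prop :=
  P 0%nat 0%nat - sum_f_R0 (fun i => P (S i) (S i)) 6 = 0
  /\ (forall i, (1 <= i <= 7)%nat -> P 0%nat i + P i 0%nat = 0)
  /\ (forall i j, (1 <= i <= 7)%nat -> (1 <= j <= 7)%nat -> i <> j -> P i j - P j i = 0).

Definition r0 (a b : nat) : Z :=
  if andb (Nat.eqb a 0) (Nat.eqb b 0) then 1%Z else if Nat.eqb a b then (-1)%Z else 0%Z.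
Definition r1 (i a b : nat) : Z := (delta 0 i a b + delta i 0 a b)%Z.
Definition r2 (i j a b : nat) : Z := (delta i j a b - delta j i a b)%Z.

Lemma Lform_r0 P : Lform P r0 = P 0%nat 0%nat - sum_f_R0 (fun i => P (S i) (S i)) 6.
Proof. unfold Lform, r0. simpl. ring. Qed.

Lemma Lform_r1 P i : (i <= 7)%nat -> Lform P (r1 i) = P 0%nat i + P i 0%nat.
Proof. intros. unfold r1. rewrite Lform_add, !Lform_delta by lia. reflexivity. Qed.

Lemma Lform_r2 P i j : (i <= 7)%nat -> (j <= 7)%nat -> Lform P (r2 i j) = P i j - P j i.
Proof. intros. unfold r2. rewrite Lform_sub, !Lform_delta by lia. reflexivity. Qed.

Definition col (k : nat) : nat -> nat -> Z := fun a b => zEf a b k.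

Definition sg (i j : nat) : Z := if Nat.ltb i j then 1%Z else (-1)%Z.

Lemma riesz_fwd P : (forall k, (k < 128)%nat -> Lform P (col k) = 0) -> RieszP P.
Proof.
  intros H. split; [|split].
  - rewrite <- Lform_r0, <- (H 0%nat) by lia. apply Lform_ext. vm_compute. reflexivity.
  - intros i Hi.
    assert (C : forallb (fun i => colEq (r1 i) (col (bi i))) (seq 1 7) = true) by (vm_compute; reflexivity).
    rewrite <- Lform_r1 by lia. rewrite (Lform_ext _ _ _ (forallb_seq' _ _ _ C i ltac:(lia))).
    apply H. pose proof (bi_le i ltac:(lia)). lia.
  - intros i j Hi Hj Hij.
    assert (C : forallb (fun i => forallb (fun j => orb (Nat.eqb i j)
        (colEq (r2 i j) (fun a b => sg i j * col (Nat.lxor (bi i) (bi j)) a b)%Z)) (seq 1 7)) (seq 1 7) = true)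
      by (vm_compute; reflexivity).
    pose proof (forallb_seq' _ _ _ C i ltac:(lia)) as C1.
    pose proof (forallb_seq' _ _ _ C1 j ltac:(lia)) as C2.
    cbv beta in C2. apply Nat.eqb_neq in Hij. rewrite Hij in C2. simpl in C2.
    rewrite <- Lform_r2 by lia. rewrite (Lform_ext _ _ _ C2), Lform_scal, H. ring.
    pose proof (bi_le i ltac:(lia)). pose proof (bi_le j ltac:(lia)). apply lxor_lt; lia.
Qed.

Definition dec1 (k : nat) : nat := S (Nat.log2 k).
Definition da (k : nat) : nat := S (Nat.log2 (k - 2 ^ Nat.log2 k)).

Definition chkR (k : nat) : bool :=
  match popcount k with
  | O => colEq (col k) r0
  | 1%nat => colEq (col k) (r1 (dec1 k)) && Nat.leb 1 (dec1 k) && Nat.leb (dec1 k) 7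
  | 2%nat => colEq (col k) (r2 (da k) (dec1 k)) && Nat.leb 1 (da k) && Nat.leb (da k) 7
             && Nat.leb 1 (dec1 k) && Nat.leb (dec1 k) 7 && negb (Nat.eqb (da k) (dec1 k))
  | _ => colEq (col k) (fun _ _ => 0%Z)
  end.

Lemma riesz_bwd P : RieszP P -> forall k, (k < 128)%nat -> Lform P (col k) = 0.
Proof.
  intros [H0 [H1 H2]] k Hk.
  assert (C : forallb chkR (seq 0 128) = true) by (vm_compute; reflexivity).
  pose proof (forallb_seq _ _ C k Hk) as Ck. unfold chkR in Ck.
  destruct (popcount k) as [|[|[|n]]].
  - rewrite (Lform_ext _ _ _ Ck), Lform_r0. exact H0.
  - apply andb_true_iff in Ck as [Ck Hb]. apply andb_true_iff in Ck as [Ck Ha].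
    apply Nat.leb_le in Ha, Hb.
    rewrite (Lform_ext _ _ _ Ck), Lform_r1 by lia. apply H1; lia.
  - repeat match type of Ck with (andb _ _ = true) => apply andb_true_iff in Ck as [Ck ?] end.
    repeat match goal with Hx : Nat.leb _ _ = true |- _ => apply Nat.leb_le in Hx end.
    match goal with Hx : negb _ = true |- _ => apply negb_true_iff, Nat.eqb_neq in Hx end.
    rewrite (Lform_ext _ _ _ Ck), Lform_r2 by lia. apply H2; lia.
  - rewrite (Lform_ext _ _ _ Ck). apply Lform_zero.
Qed.

Definition certl : list (nat * Z) := Eval compute in ([(0,(1)%Z); (1,(1)%Z); (2,(1)%Z); (3,(1)%Z); (4,(1)%Z); (5,(1)%Z); (6,(1)%Z); (0,(-1)%Z); (8,(1)%Z); (9,(1)%Z); (10,(1)%Z); (12,(-1)%Z); (12,(1)%Z); (10,(1)%Z); (9,(-1)%Z); (8,(1)%Z); (16,(1)%Z); (17,(1)%Z); (18,(1)%Z); (10,(1)%Z); (20,(1)%Z); (12,(1)%Z); (8,(1)%Z); (9,(1)%Z); (24,(1)%Z); (0,(-1)%Z); (3,(-1)%Z); (2,(1)%Z); (2,(1)%Z); (3,(1)%Z); (0,(-1)%Z); (1,(-1)%Z); (32,(1)%Z); (33,(1)%Z); (34,(1)%Z); (9,(-1)%Z); (36,(1)%Z); (8,(-1)%Z); (12,(1)%Z); (10,(1)%Z); (40,(1)%Z); (3,(1)%Z); (0,(-1)%Z); (1,(-1)%Z); (1,(-1)%Z); (0,(1)%Z); (3,(1)%Z); (2,(-1)%Z);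 (48,(1)%Z); (2,(1)%Z); (1,(-1)%Z); (0,(1)%Z); (0,(1)%Z); (1,(1)%Z); (2,(1)%Z); (3,(1)%Z); (12,(1)%Z); (10,(1)%Z); (9,(-1)%Z); (8,(1)%Z); (8,(-1)%Z); (9,(-1)%Z); (10,(-1)%Z); (12,(1)%Z); (64,(1)%Z); (65,(1)%Z); (66,(1)%Z); (8,(1)%Z); (68,(1)%Z); (9,(-1)%Z); (10,(-1)%Z); (12,(1)%Z); (72,(1)%Z); (2,(-1)%Z); (1,(1)%Z); (0,(-1)%Z); (0,(-1)%Z); (1,(-1)%Z); (2,(-1)%Z); (3,(-1)%Z); (80,(1)%Z); (3,(1)%Z); (0,(-1)%Z); (1,(-1)%Z); (1,(-1)%Z); (0,(1)%Z); (3,(1)%Z); (2,(-1)%Z); (10,(-1)%Z); (12,(1)%Z); (8,(1)%Z); (9,(1)%Z); (9,(-1)%Z); (8,(1)%Z); (12,(-1)%Z); (10,(-1)%Z); (96,(1)%Z); (0,(1)%Z); (3,(1)%Z); (2,(-1)%Z); (2,(-1)%Z); (3,(-1)%Z); (0,(1)%Z); (1,(1)%Z); (9,(1)%Z); (8,(-1)%Z); (12,(1)%Z); (10,(1)%Z); (10,(-1)%Z); (12,(1)%Z); (8,(1)%Z); (9,(1)%Z); (8,(-1)%Z); (9,(-1)%Z); (10,(-1)%Z); (12,(1)%Z); (12,(-1)%Z); (10,(-1)%Z); (9,(1)%Z); (8,(-1)%Z); (0,(1)%Z); (1,(1)%Z); (2,(1)%Z); (3,(1)%Z); (3,(1)%Z);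 (2,(-1)%Z); (1,(1)%Z); (0,(-1)%Z)]%nat).

Definition chkC (k : nat) : bool :=
  let '(m, s) := nth k certl (0%nat, 0%Z) in
  Nat.ltb m 128 && Nat.leb (popcount m) 2 && colEq (fun a b => cEI a b k) (fun a b => s * cEI a b m)%Z.

Lemma cert_prop P : (forall k, (k < 128)%nat -> (popcount k <= 2)%nat -> Lform P (fun a b => cEI a b k) = 0) ->
  forall k, (k < 128)%nat -> Lform P (fun a b => cEI a b k) = 0.
Proof.
  intros H k Hk.
  assert (C : forallb chkC (seq 0 128) = true) by (vm_compute; reflexivity).
  pose proof (forallb_seq _ _ C k Hk) as Ck. unfold chkC in Ck.
  destruct (nth k certl (0%nat, 0%Z)) as [m s].
  apply andb_true_iff in Ck as [Ck Hc]. apply andb_true_iff in Ck as [Ha Hb].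
  apply Nat.ltb_lt in Ha. apply Nat.leb_le in Hb.
  rewrite (Lform_ext _ _ _ Hc), Lform_scal, H by lia. ring.
Qed.

Lemma lin_deriv (g : R -> R) (b x : R) : (forall t, g t = g 0 + b * t) -> derivable_pt_lim g x b.
Proof.
  intros Hg eps He. exists (mkposreal 1 Rlt_0_1). intros h Hh _.
  rewrite (Hg (x + h)), (Hg x). replace ((g 0 + b * (x + h) - (g 0 + b * x)) / h - b) with 0 by (field; exact Hh).
  rewrite Rabs_R0. exact He.
Qed.

Lemma partial_eq (g : Pt -> R) i x l :
  derivable_pt_lim (fun t => g (upd x i t)) (coord x i) l -> partial g i x = l.
Proof.
  intros H. unfold partial.
  apply (uniqueness_limite (fun t => g (upd x i t)) (coord x i)); [|exact H].
  apply epsilon_spec. exists l. exact H.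
Qed.

Definition pex (i j : nat) : Z :=
  if andb (Nat.eqb i 2) (Nat.eqb j 1) then 1%Z
  else if andb (Nat.eqb i 7) (Nat.eqb j 4) then (-1)%Z else 0%Z.

Lemma ex_deriv i j x : (i <= 7)%nat -> (j <= 7)%nat ->
  derivable_pt_lim (fun t => ex_f j (upd x i t)) (coord x i) (IZR (pex i j)).
Proof.
  intros Hi Hj. destruct x as [[[[[[[x0 x1] x2] x3] x4] x5] x6] x7]. apply lin_deriv.
  destruct i as [|[|[|[|[|[|[|[|i]]]]]]]]; try lia;
  destruct j as [|[|[|[|[|[|[|[|j]]]]]]]]; try lia; intro t; unfold pex; simpl; ring.
Qed.

Lemma Lform_Z q c : Lform (fun i j => IZR (q i j)) c =
  IZR (zsum (fun i => zsum (fun j => q i j * c i j) 7) 7)%Z.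
Proof.
  unfold Lform. rewrite <- sum_IZR. apply sum_eq; intros i _. rewrite <- sum_IZR.
  apply sum_eq; intros j _. rewrite mult_IZR. reflexivity.
Qed.

Lemma Lform_ex x c : Lform (Pof ex_f x) c =
  IZR (zsum (fun i => zsum (fun j => pex i j * c i j) 7) 7)%Z.
Proof.
  rewrite <- Lform_Z. unfold Lform. apply sum_eq; intros i Hi. apply sum_eq; intros j Hj.
  unfold Pof. rewrite (partial_eq _ _ _ _ (ex_deriv i j x Hi Hj)). reflexivity.
Qed.

Lemma ex_DI x : MVzero (dirac ex_f x ** I).
Proof.
  intros k Hk. rewrite DI_L, Lform_ex by exact Hk.
  assert (C : checkeq (fun k => zsum (fun i => zsum (fun j => pex i j * cEI i j k) 7) 7)%Z (fun _ => 0%Z) = true)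
    by (vm_compute; reflexivity).
  rewrite (checkeq_ok _ _ C k Hk). ring.
Qed.

Lemma ex_dirac x : MVeq (dirac ex_f x) (mv_sub (e 4 ** e 7) (e 1 ** e 2)).
Proof.
  intros k Hk. rewrite dirac_L, Lform_ex by exact Hk. unfold mv_sub.
  rewrite !eij_val by lia. rewrite <- minus_IZR. f_equal.
  assert (C : checkeq (fun k => zsum (fun i => zsum (fun j => pex i j * zEf i j k) 7) 7)%Z
    (fun k => zEf 4 7 k - zEf 1 2 k)%Z = true) by (vm_compute; reflexivity).
  exact (checkeq_ok _ _ C k Hk).
Qed.

Lemma ex_nonzero : ~ MVzero (mv_sub (e 4 ** e 7) (e 1 ** e 2)).
Proof.
  intros H. specialize (H 72%nat ltac:(lia)). unfold mv_sub in H.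
  rewrite !eij_val in H by lia.
  replace (zEf 4 7 72) with 1%Z in H by (vm_compute; reflexivity).
  replace (zEf 1 2 72) with 0%Z in H by (vm_compute; reflexivity).
  lra.
Qed.

Lemma ex_has : HasPartials ex_f.
Proof. intros j i x Hj Hi. exists (IZR (pex i j)). apply ex_deriv; assumption. Qed.

Theorem mainTheorem17 :
  (forall f : ParaFun, HasPartials f ->
     ((forall x, MVzero (dirac f x)) <-> (forall x, Riesz f x)))
  /\ (forall f : ParaFun, InMR f -> forall x, MVzero (dirac f x ** I))
  /\ (exists f : ParaFun, HasPartials f /\ (forall x, MVzero (dirac f x ** I))
                          /\ ~ InMR f)
  /\ (forall f : ParaFun, HasPartials f ->
       ((forall x, MVzero (dirac f x ** I)) <->
        (forall x (j : nat), (j <= 2)%nat -> MVzero (grade j (dirac f x ** I)))))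
  /\ (HasPartials ex_f
      /\ (forall x, MVeq (dirac ex_f x) (mv_sub (e 4 ** e 7) (e 1 ** e 2)))
      /\ ~ MVzero (mv_sub (e 4 ** e 7) (e 1 ** e 2))
      /\ (forall x (j : nat), (j <= 2)%nat -> MVzero (grade j (dirac ex_f x ** I)))).
Proof.
  assert (Hg : forall c j, MVzero c -> MVzero (grade j c)).
  { intros c j H k Hk. unfold grade. destruct (Nat.eqb _ _); [apply H; exact Hk|reflexivity]. }
  split; [|split; [|split; [|split]]].
  - intros f _. split.
    + intros H x. change (RieszP (Pof f x)). apply riesz_fwd. intros k Hk.
      unfold col. rewrite <- dirac_L by exact Hk. apply H. exact Hk.
    + intros H x k Hk. rewrite dirac_L by exact Hk. apply riesz_bwd; [|exact Hk]. apply H.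
  - intros f [_ H] x k Hk. unfold mv_mul. apply sum_zero. intros A HA.
    rewrite (H x A) by lia. ring.
  - exists ex_f. split; [exact ex_has|split; [exact ex_DI|]].
    intros [_ H]. apply ex_nonzero. intros k Hk. rewrite <- (ex_dirac (0,0,0,0,0,0,0,0) k Hk). apply H. exact Hk.
  - intros f _. split.
    + intros H x j _. apply Hg. apply H.
    + intros H x k Hk. rewrite DI_L by exact Hk.
      rewrite (cert_prop (Pof f x)); [ring| |exact Hk].
      intros m Hm Hp. specialize (H x (popcount m) Hp m Hm). unfold grade in H.
      rewrite Nat.eqb_refl, DI_L in H by exact Hm. lra.
  - split; [exact ex_has|split; [exact ex_dirac|split; [exact ex_nonzero|]]].
    intros x j _. apply Hg. apply ex_DI.
Qed.
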